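(* Let $(X_1,\dots,X_d,Y)$ follow a structural equation model with causal DAG $G$ in which $Y$ is a sink node and $Y=f^*(X)+\varepsilon$ with $\mathbb{E}[\varepsilon]=0$, $\varepsilon$ independent of $X$, where $f^*$ depends on $X$ only through $X_{\mathrm{pa}(Y)}$. Let $\mathcal{I}\subseteq\{1,\dots,d\}$ satisfy $$\mathrm{pa}(Y)\subseteq\mathcal{I}\cup\mathrm{desc}(\mathcal{I})^C.$$ Then for every covariate-fixing transformation $T_{\mathcal{I}\to z}$, $$\mathbb{E}_X\big[f^*(T_{\mathcal{I}\to z}(X))-f^*(X)\big]=\mathbb{E}_{\widetilde X\sim do(X_{\mathcal{I}}=z_{\mathcal{I}})}\big[f^*(\widetilde X)\big]-\mathbb{E}_X\big[f^*(X)\big].$$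
   Context: $\mathrm{pa}(Y)$ is the set of parents of $Y$ in $G$; $\mathrm{desc}(\mathcal{I})$ is the set of covariates that are descendants in $G$ of at least one variable in $\mathcal{I}$, and $A^C$ denotes complement in $\{1,\dots,d\}$. For $\mathcal{I}$ and $z\in\mathbb{R}^d$, the covariate-fixing transformation is $T_{\mathcal{I}\to z}(x)_j=z_j$ for $j\in\mathcal{I}$ and $T_{\mathcal{I}\to z}(x)_j=x_j$ for $j\notin\mathcal{I}$. $\mathbb{E}_X$ is expectation under the observational (pre-intervention) distribution of $X$; $do(X_{\mathcal{I}}=z_{\mathcal{I}})$ denotes the interventional distribution of the covariates in the SEM obtained by Pearl's do-operation setting the variables in $\mathcal{I}$ to $z_{\mathcal{I}}$ (other variables, including descendants of $\mathcal{I}$, are generated by their structural equations). *)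

(* Defs.v *)
From HB Require Import structures.
From mathcomp Require Import all_boot all_order all_algebra.
From mathcomp Require Import all_classical all_reals all_analysis.
Set Implicit Arguments. Unset Strict Implicit. Unset Printing Implicit Defensive.
Import Order.TTheory GRing.Theory Num.Theory.
Local Open Scope classical_set_scope.
Local Open Scope ring_scope.

Definition acyclic (d : nat) (E : rel 'I_d) : Prop :=
  forall i j, E i j -> ~~ connect E j i.

Definition parents (d : nat) (E : rel 'I_d) (j : 'I_d) : {set 'I_d} :=
  [set i | E i j].

Definition desc (d : nat) (E : rel 'I_d) (I : {set 'I_d}) : {set 'I_d} :=
  [set j | [exists i in I, (i != j) && connect E i j]].

Definition fix_cov (R : Type) (d : nat) (I : {set 'I_d}) (z x : 'I_d -> R)
  : 'I_d -> R := fun j => if j \in I then z j else x j.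

Definition depends_only_on (R : Type) (d : nat) (S : {set 'I_d})
  (f : ('I_d -> R) -> R) : Prop :=
  forall x x', (forall i, i \in S -> x i = x' i) -> f x = f x'.

Definition mutually_independent {dT} {T : measurableType dT} {R : realType}
  (P : probability T R) (n : nat) (N : 'I_n -> T -> R) : Prop :=
  forall (J : {set 'I_n}) (B : 'I_n -> set R),
    (forall j, measurable (B j)) ->
    P (\bigcap_(j in [set j | j \in J]) (N j @^-1` B j)) =
    (\prod_(j in J) P (N j @^-1` B j))%E.

Definition indep_of_vector {dT} {T : measurableType dT} {R : realType}
  (P : probability T R) (e : T -> R) (n : nat) (X : 'I_n -> T -> R) : Prop :=
  forall (A : set R) (B : 'I_n -> set R),
    measurable A -> (forall j, measurable (B j)) ->
    P (e @^-1` A `&` \bigcap_(j in setT) (X j @^-1` B j)) =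
    (P (e @^-1` A) * P (\bigcap_(j in setT) (X j @^-1` B j)))%E.

(* Main.v *)
Require Import Defs.
From HB Require Import structures.
From mathcomp Require Import all_boot all_order all_algebra.
From mathcomp Require Import all_classical all_reals all_analysis.
Import Order.TTheory GRing.Theory Num.Theory.
Lemma notdesc_eq (A : Type) (d : nat) (E : rel 'I_d) (hE : acyclic E)
  (g : 'I_d -> ('I_d -> A) -> A -> A)
  (hg : forall j x x' n, (forall i, E i j -> x i = x' i) -> g j x n = g j x' n)
  (I : {set 'I_d}) (z : 'I_d -> A) (Nw Xw Xtw : 'I_d -> A)
  (hX : forall j, Xw j = g j Xw (Nw j))
  (hXt : forall j, Xtw j = if j \in I then z j else g j Xtw (Nw j)) :
  forall j, j \notin I -> j \notin desc E I -> Xtw j = Xw j.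
Proof.
have key : forall n j, #|[set i | connect E i j]| <= n ->
   j \notin I -> j \notin desc E I -> Xtw j = Xw j.
  elim=> [|n IH] j hn hjI hjD.
    have : 0 < #|[set i | connect E i j]| by apply/card_gt0P; exists j; rewrite inE connect0.
    by rewrite leqn0 in hn; rewrite (eqP hn).
  rewrite hXt (negbTE hjI) hX; apply: hg => k hkj.
  have hkI : k \notin I.
    apply/negP=> hk; move/negP: hjD; apply; rewrite inE; apply/existsP; exists k.
    rewrite hk /=; apply/andP; split; last exact: connect1.
    apply/eqP=> ekj; subst k; move: (hE _ _ hkj); by rewrite connect0.
  have hkD : k \notin desc E I.
    apply/negP; rewrite inE => /existsP [i /andP [hi /andP [hik hc]]].
    move/negP: hjD; apply; rewrite inE; apply/existsP; exists i; rewrite hi /=.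
    have cij : connect E i j by apply: connect_trans hc (connect1 hkj).
    rewrite cij andbT; apply/eqP=> eij; subst i.
    by move: (hE _ _ hkj); rewrite hc.
  apply: IH hkI hkD.
  rewrite -ltnS; apply: leq_trans hn; apply: proper_card; apply/properP; split.
    apply/fintype.subsetP=> i; rewrite !inE => hc; apply: connect_trans hc (connect1 hkj).
  exists j; first by rewrite inE connect0.
  by rewrite inE; apply/negP=> hc; move: (hE _ _ hkj); rewrite hc.
move=> j; exact: (key _ j (leqnn _)).
Qed.

Local Open Scope classical_set_scope.
Local Open Scope ring_scope.


Theorem theorem3
  (dT : measure_display) (T : measurableType dT) (R : realType)
  (P : probability T R) (d : nat)
  (* causal DAG on the covariates; Y is a sink with parent set paY *)
  (E : rel 'I_d) (hE : acyclic E) (paY : {set 'I_d})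
  (* structural equations X_j = g_j(X_pa(j), N_j), noises jointly independent *)
  (g : 'I_d -> ('I_d -> R) -> R -> R)
  (hg : forall j x x' n, (forall i, E i j -> x i = x' i) -> g j x n = g j x' n)
  (N : 'I_d -> T -> R) (hNm : forall j, measurable_fun setT (N j))
  (hNind : mutually_independent P N)
  (X : 'I_d -> T -> R) (hXm : forall j, measurable_fun setT (X j))
  (hX : forall j w, X j w = g j (fun i => X i w) (N j w))
  (* response Y = f*(X) + eps, E[eps] = 0, eps independent of X *)
  (fstar : ('I_d -> R) -> R) (hf : depends_only_on paY fstar)
  (eps : T -> R) (heps_int : P.-integrable setT (fun w => (eps w)%:E))
  (heps0 : (\int[P]_w (eps w)%:E = 0)%E)
  (heps_ind : indep_of_vector P eps X)
  (Y : T -> R) (hY : forall w, Y w = fstar (fun i => X i w) + eps w)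
  (* intervention set *)
  (I : {set 'I_d}) (hI : paY \subset I :|: ~: desc E I)
  (z : 'I_d -> R)
  (* interventional covariates under do(X_I = z_I), generated by the SEM
     with the same noises *)
  (Xt : 'I_d -> T -> R) (hXtm : forall j, measurable_fun setT (Xt j))
  (hXt : forall j w, Xt j w =
           if j \in I then z j else g j (fun i => Xt i w) (N j w))
  (* the expectations appearing in the statement exist *)
  (hfX : P.-integrable setT (fun w => (fstar (fun i => X i w))%:E))
  (hfXt : P.-integrable setT (fun w => (fstar (fun i => Xt i w))%:E)) :
  (\int[P]_w (fstar (fix_cov I z (fun i => X i w)) - fstar (fun i => X i w))%:E
   = \int[P]_w (fstar (fun i => Xt i w))%:E
     - \int[P]_w (fstar (fun i => X i w))%:E)%E.
Proof.
have pw : forall w, fstar (fix_cov I z (fun i => X i w)) = fstar (fun i => Xt i w).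
  move=> w; apply: hf => i hi.
  rewrite /fix_cov; case: ifP => hiI; first by rewrite hXt hiI.
  move/fintype.subsetP: hI => /(_ i hi); rewrite finset.in_setU hiI /= finset.in_setC => hD.
  symmetry; apply: (@notdesc_eq R d E hE g hg I z (fun j => N j w)
     (fun j => X j w) (fun j => Xt j w)).
  - by move=> j; exact: hX.
  - by move=> j; exact: hXt.
  - by rewrite hiI.
  - exact: hD.
under eq_integral do rewrite pw EFinB.
rewrite (@integralB_EFin _ _ _ P setT (fun w => fstar (fun i => Xt i w))
  (fun w => fstar (fun i => X i w)) measurableT hfXt hfX).
by [].
Qed.
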